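(* Let $\alpha\ge1$, $\beta,\gamma\ge0$ be integers and let $(\mathbf a,\mathbf b)$ be a binary GCP of length $N=2^\alpha10^\beta26^\gamma$ obtained by the recursive Turyn construction $(\mathbf e_0,\mathbf f_0)=K_2$, $(\mathbf e_i,\mathbf f_i)=\mathrm{Turyn}(\mathcal A_i,(\mathbf e_{i-1},\mathbf f_{i-1}))$ with each $\mathcal A_i\in\{K_2,K_{10},K_{26}\}$ (so that in total $K_2$ is used $\alpha$ times, $K_{10}$ $\beta$ times and $K_{26}$ $\gamma$ times). Let $(\mathbf c,\mathbf d)=(\overleftarrow{\mathbf b},-\overleftarrow{\mathbf a})$ be its complementary mate, let $\mathbf e=(\mathbf a\|\mathbf c)$ and $\mathbf f=(\mathbf b\|\mathbf d)$ (length $2N$), and for $x_0,y_0,x_1,y_1\in\mathbb U_q$ let $\mathbf g=(x_0,e_0,\dots,e_{2N-1},y_0)$ and $\mathbf h=(x_1,f_0,\dots,f_{2N-1},y_1)$. If $$x_0-\overline{y_1}=0,\quad x_1+\overline{y_0}=0,\quad x_0=x_1,\quad \overline{y_0}=-\overline{y_1},$$ then $(\mathbf g,\mathbf h)$ is a $(2N+2,\,N/2+1)$-CZCP.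
   Context: $q\ge2$ is an integer and $\mathbb U_q=\{e^{2\pi\sqrt{-1}t/q}:0\le t<q\}$. $\overleftarrow{\mathbf a}$ denotes the reversal of $\mathbf a$; $\|$ denotes concatenation. A binary GCP (Golay complementary pair) of length $N$ is a pair of $\pm1$ sequences with $\rho_{\mathbf a}(\tau)+\rho_{\mathbf b}(\tau)=0$ for all $\tau\neq0$. Kernels (written with $+=1$, $-=-1$; first row $\mathbf a$, second row $\mathbf b$): $K_2=(++,\;+-)$; $K_{10}=(++-+-+--++,\;++-+++++--)$; $K_{26}=(++++-++--+-+-+--+-+++--+++,\;++++-++--+-+++++-+---++---)$. Turyn's method: for binary GCPs $\mathcal A=(\mathbf a,\mathbf b)$ of length $N$ and $\mathcal B=(\mathbf c,\mathbf d)$ of length $M$, $\mathrm{Turyn}(\mathcal A,\mathcal B)=(\mathbf e,\mathbf f)$ of length $MN$ with $\mathbf e=\mathbf c\otimes\frac{\mathbf a+\mathbf b}2-\overleftarrow{\mathbf d}\otimes\frac{\mathbf b-\mathbf a}2$, $\mathbf f=\mathbf d\otimes\frac{\mathbf a+\mathbf b}2+\overleftarrow{\mathbf c}\otimes\frac{\mathbf b-\mathbf a}2$, where $\mathbf u\otimes\mathbf v=(u_0\mathbf v,u_1\mathbf v,\dots)$ is the Kronecker product. Aperiodic correlation: for complex sequences $\mathbf a,\mathbf b$ of length $N$, $\rho_{\mathbf a,\mathbf b}(\tau)=\sum_{k=0}^{N-1-\tau}a_k\overline{b_{k+\tau}}$ for $0\le\tau\le N-1$, $\rho_{\mathbf a,\mathbf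 b}(\tau)=\sum_{k=0}^{N-1+\tau}a_{k-\tau}\overline{b_k}$ for $-(N-1)\le\tau\le-1$, and $0$ for $|\tau|\ge N$; $\rho_{\mathbf a}=\rho_{\mathbf a,\mathbf a}$. CZCP: with $\mathcal T_1=\{1,\dots,Z\}$, $\mathcal T_2=\{N-Z,\dots,N-1\}$, a pair $(\mathbf a,\mathbf b)$ of length-$N$ sequences is an $(N,Z)$-CZCP if $\rho_{\mathbf a}(\tau)+\rho_{\mathbf b}(\tau)=0$ for all $|\tau|\in\mathcal T_1\cup\mathcal T_2$ and $\rho_{\mathbf a,\mathbf b}(\tau)+\rho_{\mathbf b,\mathbf a}(\tau)=0$ for all $|\tau|\in\mathcal T_2$. *)

(* Defs.v *)
From HB Require Import structures.
From mathcomp Require Import all_boot all_order all_algebra all_field.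
Set Implicit Arguments. Unset Strict Implicit. Unset Printing Implicit Defensive.
Import Order.TTheory GRing.Theory Num.Theory.
Local Open Scope ring_scope.

(* U_q : the q-th roots of unity {exp(2 pi i t/q) : 0 <= t < q}. *)
Definition in_Uq (q : nat) (z : algC) : Prop := z ^+ q = 1.

Definition rho (a b : seq algC) (tau : int) : algC :=
  match tau with
  | Posz n => \sum_(k < size a - n) a`_k * (b`_(k + n))^*
  | Negz m => \sum_(k < size a - m.+1) a`_(k + m.+1) * (b`_k)^*
  end.

Definition acorr (a : seq algC) (tau : int) : algC := rho a a tau.

Definition CZCP (N Z : nat) (a b : seq algC) : Prop :=
  [/\ size a = N, size b = N,
   (forall tau : int,
      ((1 <= `|tau| <= Z)%N || (N - Z <= `|tau| <= N - 1)%N) ->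
      acorr a tau + acorr b tau = 0) &
   (forall tau : int, (N - Z <= `|tau| <= N - 1)%N ->
      rho a b tau + rho b a tau = 0)].

Definition pm (s : seq bool) : seq algC := [seq (if x then 1 else -1) | x <- s].

Definition K2 : seq algC * seq algC :=
  (pm [:: true; true], pm [:: true; false]).
Definition K10 : seq algC * seq algC :=
  (pm [:: true; true; false; true; false; true; false; false; true; true],
   pm [:: true; true; false; true; true; true; true; true; false; false]).
Definition K26 : seq algC * seq algC :=
  (pm [:: true; true; true; true; false; true; true; false; false; true; false; true; false;
          true; false; false; true; false; true; true; true; false; false; true; true; true],
   pm [:: true; true; true; true; false; true; true; false; false; true; false; true; true;
          true; true; true; false; true; false; false; false; true; true; false; false; false]).

Inductive kernel := Ker2 | Ker10 | Ker26.
Definition kernel_eqb (x y : kernel) : bool :=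
  match x, y with Ker2, Ker2 | Ker10, Ker10 | Ker26, Ker26 => true | _, _ => false end.

Definition kernel_pair (k : kernel) : seq algC * seq algC :=
  match k with Ker2 => K2 | Ker10 => K10 | Ker26 => K26 end.

Definition kron (u v : seq algC) : seq algC := flatten [seq [seq x * y | y <- v] | x <- u].

Definition seqadd (u v : seq algC) : seq algC := [seq p.1 + p.2 | p <- zip u v].
Definition seqscale (c : algC) (u : seq algC) : seq algC := [seq c * x | x <- u].

Definition turyn (A B : seq algC * seq algC) : seq algC * seq algC :=
  let: (a, b) := A in let: (c, d) := B in
  let s := seqscale (2^-1) (seqadd a b) in
  let t := seqscale (2^-1) (seqadd b (seqscale (-1) a)) in
  (seqadd (kron c s) (seqscale (-1) (kron (rev d) t)),
   seqadd (kron d s) (kron (rev c) t)).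

Definition turyn_rec (ks : seq kernel) : seq algC * seq algC :=
  foldl (fun P k => turyn (kernel_pair k) P) K2 ks.

(* Main.v *)
Require Import Defs.
From HB Require Import structures.
From mathcomp Require Import all_boot all_order all_algebra all_field.
From mathcomp Require Import ring lra zify.
Import Order.TTheory GRing.Theory Num.Theory.
Local Open Scope ring_scope.

Set Implicit Arguments. Unset Strict Implicit. Unset Printing Implicit Defensive.

Lemma Poly_cat (s1 s2 : seq algC) :
  Poly (s1 ++ s2) = Poly s1 + 'X^(size s1) * Poly s2.
Proof.
elim: s1 => [|x s IH] /=; first by rewrite expr0 mul1r add0r.
rewrite !cons_poly_def IH exprS; ring.
Qed.

Lemma Poly_scale (c : algC) (s : seq algC) :
  Poly (seqscale c s) = c%:P * Poly s.
Proof.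
elim: s => [|x s IH] /=; first by rewrite mulr0.
rewrite !cons_poly_def IH polyCM; ring.
Qed.

Lemma Poly_opp (s : seq algC) : Poly [seq - x | x <- s] = - Poly s.
Proof.
elim: s => [|x s IH] /=; first by rewrite oppr0.
rewrite !cons_poly_def IH polyCN; ring.
Qed.

Lemma Poly_add (u v : seq algC) : size u = size v ->
  Poly (seqadd u v) = Poly u + Poly v.
Proof.
elim: u v => [|x u IH] [|y v] //=; first by rewrite addr0.
move=> [] /IH; rewrite /seqadd /= => ->.
rewrite !cons_poly_def polyCD; ring.
Qed.

Lemma kron_cons (x : algC) u v : kron (x :: u) v = seqscale x v ++ kron u v.
Proof. by []. Qed.

Lemma size_seqscale c (u : seq algC) : size (seqscale c u) = size u.
Proof. exact: size_map. Qed.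

Lemma size_kron (u v : seq algC) : size (kron u v) = (size u * size v)%N.
Proof. elim: u => [|x u IH] //=; by rewrite kron_cons size_cat size_seqscale IH mulSn. Qed.


Lemma size_seqadd (u v : seq algC) : size (seqadd u v) = minn (size u) (size v).
Proof. by rewrite size_map size_zip. Qed.

Lemma comp_Xn k n : ('X^k : {poly algC}) \Po 'X^n = 'X^(k * n).
Proof.
elim: k => [|k IH]; first by rewrite expr0 comp_polyC.
by rewrite exprS comp_polyM comp_polyX IH mulSn exprD.
Qed.

Lemma Poly_kron (u v : seq algC) :
  Poly (kron u v) = (Poly u \Po 'X^(size v)) * Poly v.
Proof.
elim: u => [|x u IH]; first by rewrite /= comp_poly0 mul0r.
rewrite kron_cons Poly_cat Poly_scale IH size_seqscale /= cons_poly_def.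
rewrite comp_poly_MXaddC; ring.
Qed.

Lemma rev_kron (u v : seq algC) : rev (kron u v) = kron (rev u) (rev v).
Proof.
rewrite /kron rev_flatten -map_comp -map_rev; congr flatten.

by apply: eq_map => x /=; rewrite -map_rev.
Qed.

Lemma rev_seqadd (u v : seq algC) : size u = size v ->
  rev (seqadd u v) = seqadd (rev u) (rev v).
Proof. by move=> h; rewrite /seqadd -map_rev rev_zip. Qed.

Lemma rev_seqscale c (u : seq algC) : rev (seqscale c u) = seqscale c (rev u).
Proof. by rewrite /seqscale -map_rev. Qed.

Lemma nth_seqadd (u v : seq algC) i : size u = size v ->
  (seqadd u v)`_i = u`_i + v`_i.
Proof.
elim: u v i => [|x u IH] [|y v] //= i; first by rewrite nth_nil addr0.
by move=> [] /IH h; case: i => [|i] //=; rewrite -h.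
Qed.

Lemma nth_seqscale c (u : seq algC) i : (seqscale c u)`_i = c * u`_i.
Proof.
case: (ltnP i (size u)) => h; first by rewrite (nth_map 0).
by rewrite !nth_default ?size_seqscale ?mulr0.
Qed.

Lemma nth_kron (u v : seq algC) j : (0 < size v)%N ->
  (kron u v)`_j = u`_(j %/ size v) * v`_(j %% size v).
Proof.
move=> hv; elim: u j => [|x u IH] j; first by rewrite /kron /= !nth_nil mul0r.
rewrite kron_cons nth_cat size_seqscale.
case: ltnP => hj.
  by rewrite nth_seqscale divn_small // modn_small.
rewrite IH -(subnKC hj) divnDl ?dvdnn // divnn hv modnDl add1n /=.
by rewrite addKn.
Qed.

Lemma nth_rev0 (s : seq algC) i : (i < size s)%N -> (rev s)`_i = s`_(size s - i.+1).
Proof. exact: nth_rev. Qed.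

Definition real_seq (s : seq algC) := forall i, (s`_i)^* = s`_i.
Definition GCPp (c d : seq algC) M :=
  Poly c * Poly (rev c) + Poly d * Poly (rev d) = (2 * M)%:R * 'X^(M.-1).
Definition Inv m (P : seq algC * seq algC) :=
  [/\ size P.1 = (2 * m)%N /\ size P.2 = (2 * m)%N, real_seq P.1 /\ real_seq P.2,
      GCPp P.1 P.2 (2 * m), (forall i, (i < m)%N -> P.1`_i = P.2`_i)
    & (forall i, (m <= i)%N -> P.1`_i = - P.2`_i)].
Definition KerOK n (A : seq algC * seq algC) :=
  [/\ size A.1 = n /\ size A.2 = n, (0 < n)%N, real_seq A.1 /\ real_seq A.2
    & GCPp A.1 A.2 n].

Lemma real_add u v : size u = size v -> real_seq u -> real_seq v ->
  real_seq (seqadd u v).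
Proof. by move=> h ru rv i; rewrite nth_seqadd // -[in RHS]ru -[in RHS]rv rmorphD. Qed.

Lemma real_scale c u : c^* = c -> real_seq u -> real_seq (seqscale c u).
Proof. by move=> hc ru i; rewrite nth_seqscale -[in RHS]hc -[in RHS]ru rmorphM. Qed.

Lemma real_kron u v : (0 < size v)%N -> real_seq u -> real_seq v ->
  real_seq (kron u v).
Proof. by move=> h ru rv i; rewrite nth_kron // -[in RHS]ru -[in RHS]rv rmorphM. Qed.

Lemma real_rev u : real_seq u -> real_seq (rev u).
Proof.
move=> ru i; case: (ltnP i (size u)) => h.
  by rewrite nth_rev // ru.
by rewrite nth_default ?size_rev // rmorph0.
Qed.

Lemma conj_half : (2^-1 : algC)^* = 2^-1.
Proof. by rewrite fmorphV rmorph_nat. Qed.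

Lemma conj_m1 : (-1 : algC)^* = -1.
Proof. by rewrite rmorphN1. Qed.

Lemma half2P : ((2^-1 : algC)%:P * 2%:R : {poly algC}) = 1.
Proof. by rewrite -(polyC_natr _ 2) -polyCM mulVf ?polyC1 // pnatr_eq0. Qed.

Lemma turyn_step n m a b c d : KerOK n (a, b) -> (0 < m)%N -> Inv m (c, d) ->
  Inv (m * n) (turyn (a, b) (c, d)).
Proof.
rewrite /KerOK /Inv => -[/= [sa sb] n0 [ra rb] ga] m0 [/= [sc sd] [rc rd] gc h1 h2].
rewrite /turyn /=.
set h : algC := 2^-1.
set s := seqscale h (seqadd a b).
set t := seqscale h (seqadd b (seqscale (-1) a)).
have ss : size s = n by rewrite size_seqscale size_seqadd sa sb minnn.
have st : size t = n by rewrite size_seqscale size_seqadd size_seqscale sa sb minnn.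
have rs : real_seq s.
  by apply: real_scale; [exact: conj_half| apply: real_add; rewrite ?sa ?sb].
have rt : real_seq t.
  apply: real_scale; [exact: conj_half| apply: real_add; rewrite ?size_seqscale ?sa ?sb //].
  by apply: real_scale => //; exact: conj_m1.
set e := seqadd _ _; set f := seqadd (kron d s) _.
have se : size e = (2 * (m * n))%N.
  by rewrite size_seqadd size_seqscale !size_kron size_rev sc sd ss st minnn mulnA.
have sf : size f = (2 * (m * n))%N.
  by rewrite size_seqadd !size_kron size_rev sc sd ss st minnn mulnA.
split => //=; first split.
- rewrite /e; apply: real_add.
  + by rewrite size_seqscale !size_kron size_rev sc sd ss st.
  + by apply: real_kron; rewrite ?ss.
  + apply: real_scale; first exact: conj_m1.
    by apply: real_kron; rewrite ?st //; exact: real_rev.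
- rewrite /f; apply: real_add.
  + by rewrite !size_kron size_rev sc sd ss st.
  + by apply: real_kron; rewrite ?ss.
  + by apply: real_kron; rewrite ?st //; exact: real_rev.
- rewrite /GCPp.
  have PK u v : size v = n -> Poly (kron u v) = (Poly u \Po 'X^n) * Poly v.
    by move=> hv; rewrite Poly_kron hv.
  have srs : size (rev s) = n by rewrite size_rev.
  have srt : size (rev t) = n by rewrite size_rev.
  have Ps : Poly s = h%:P * (Poly a + Poly b).
    by rewrite /s Poly_scale Poly_add ?sa ?sb.
  have Pt : Poly t = h%:P * (Poly b - Poly a).
    by rewrite /t Poly_scale Poly_add ?size_seqscale ?sa ?sb // Poly_scale polyCN polyC1 mulN1r.
  have Psr : Poly (rev s) = h%:P * (Poly (rev a) + Poly (rev b)).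
    by rewrite /s rev_seqscale rev_seqadd ?sa ?sb // Poly_scale Poly_add ?size_rev ?sa ?sb.
  have Ptr : Poly (rev t) = h%:P * (Poly (rev b) - Poly (rev a)).
    rewrite /t rev_seqscale rev_seqadd ?size_seqscale ?sa ?sb // Poly_scale Poly_add.
      by rewrite rev_seqscale Poly_scale polyCN polyC1 mulN1r.
    by rewrite size_rev rev_seqscale size_seqscale size_rev sa sb.
  have Pe : Poly e = (Poly c \Po 'X^n) * Poly s - (Poly (rev d) \Po 'X^n) * Poly t.
    rewrite /e Poly_add ?size_seqscale ?size_kron ?size_rev ?sc ?sd ?ss ?st //.
    by rewrite Poly_scale !PK // polyCN polyC1 mulN1r.
  have Pf : Poly f = (Poly d \Po 'X^n) * Poly s + (Poly (rev c) \Po 'X^n) * Poly t.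
    rewrite /f Poly_add ?size_seqscale ?size_kron ?size_rev ?sc ?sd ?ss ?st //.
    by rewrite !PK.
  have Per : Poly (rev e) = (Poly (rev c) \Po 'X^n) * Poly (rev s) - (Poly d \Po 'X^n) * Poly (rev t).
    rewrite /e rev_seqadd ?size_seqscale ?size_kron ?size_rev ?sc ?sd ?ss ?st //.
    rewrite rev_seqscale !rev_kron revK Poly_add ?size_seqscale ?size_kron ?size_rev ?sc ?sd ?ss ?st //.
    by rewrite Poly_scale !PK // polyCN polyC1 mulN1r.
  have Pfr : Poly (rev f) = (Poly (rev d) \Po 'X^n) * Poly (rev s) + (Poly c \Po 'X^n) * Poly (rev t).
    rewrite /f rev_seqadd ?size_seqscale ?size_kron ?size_rev ?sc ?sd ?ss ?st //.
    rewrite !rev_kron revK Poly_add ?size_seqscale ?size_kron ?size_rev ?sc ?sd ?ss ?st //.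
    by rewrite !PK.
  rewrite Pe Per Pf Pfr Ps Pt Psr Ptr.
  transitivity (((Poly c * Poly (rev c) + Poly d * Poly (rev d)) \Po 'X^n) *
     (h%:P * h%:P * 2%:R * (Poly a * Poly (rev a) + Poly b * Poly (rev b)))).
    rewrite comp_polyD !comp_polyM; ring.
  rewrite gc ga comp_polyM -polyC_natr comp_polyC comp_Xn.
  transitivity ((h%:P * 2%:R) * (h%:P * 2%:R) *
     ((2 * (2 * (m * n)))%:R * ('X^((2 * m).-1 * n) * 'X^(n.-1)))).
    rewrite !natrM; ring.
  rewrite half2P !mul1r -exprD; congr (_ * 'X^_).
  have hmn : (n <= m * n)%N by rewrite leq_pmull.
  rewrite -!subn1 mulnBl mul1n -mulnA; lia.
- move=> i hi.
  have hu : (i %/ n < m)%N by rewrite ltn_divLR.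
  have hu2 : (i %/ n < 2 * m)%N by lia.
  have hk : (m <= 2 * m - (i %/ n).+1)%N by lia.
  rewrite /e /f !nth_seqadd ?size_seqscale ?size_kron ?size_rev ?sc ?sd ?ss ?st //.
  rewrite nth_seqscale !nth_kron ?ss ?st // !nth_rev ?sc ?sd //.
  rewrite (h1 _ hu) (h2 _ hk); ring.
- move=> i hi.
  case: (ltnP i (2 * (m * n))) => hi2; last first.
    by rewrite !nth_default ?se ?sf // oppr0.
  have hu : (m <= i %/ n)%N by rewrite leq_divRL.
  have hu2 : (i %/ n < 2 * m)%N by rewrite ltn_divLR // -mulnA.
  have hk : (2 * m - (i %/ n).+1 < m)%N by lia.
  rewrite /e /f !nth_seqadd ?size_seqscale ?size_kron ?size_rev ?sc ?sd ?ss ?st //.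
  rewrite nth_seqscale !nth_kron ?ss ?st // !nth_rev ?sc ?sd //.
  rewrite (h2 _ hu) (h1 _ hk); ring.
Qed.

Definition ipm (s : seq bool) : seq int := [seq (if x then 1 else -1) | x <- s].

Lemma pm_ipm s : pm s = map (fun z : int => z%:~R) (ipm s).
Proof.
rewrite /pm /ipm -map_comp; apply: eq_map => x /=.
by case: x => /=; rewrite ?rmorphN rmorph1.
Qed.

Definition convi (u v : seq int) k : int :=
  foldr (fun j acc => u`_j * v`_(k - j) + acc) 0 (iota 0 k.+1).

Definition check (u v : seq int) n : bool :=
  all (fun k => convi u (rev u) k + convi v (rev v) k ==
                (if k == n.-1 then Posz (2 * n) else 0)) (iota 0 (2 * n)).

Lemma big_foldr_int (r : seq nat) (F : nat -> int) :
  \sum_(j <- r) F j = foldr (fun j acc => F j + acc) 0 r.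
Proof. by elim: r => [|x r IH]; rewrite ?big_nil // big_cons IH. Qed.

Lemma sum_convi (u v : seq int) k :
  \sum_(j < k.+1) u`_j * v`_(k - j) = convi u v k.
Proof.
by rewrite -(big_mkord xpredT (fun j => u`_j * v`_(k - j))) /index_iota subn0 big_foldr_int.
Qed.

Lemma nth_intr (s : seq int) i :
  (map (fun z : int => z%:~R) s)`_i = (s`_i)%:~R :> algC.
Proof.
case: (ltnP i (size s)) => h; first by rewrite (nth_map 0).
by rewrite !nth_default ?size_map.
Qed.

Lemma GCP_of_check (u v : seq int) n : size u = n -> size v = n ->
  check u v n -> GCPp (map (fun z : int => z%:~R) u) (map (fun z : int => z%:~R) v) n.
Proof.
move=> su sv /allP ch; rewrite /GCPp; apply/polyP => k.
rewrite mulr_natl coefMn coefXn coefD !coefM.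
case: (ltnP k (2 * n)) => hk.
  have /eqP E : convi u (rev u) k + convi v (rev v) k == (if k == n.-1 then Posz (2 * n) else 0) by apply: ch; rewrite mem_iota add0n.
  under eq_bigr do rewrite !coef_Poly -map_rev !nth_intr -rmorphM.
  under [X in _ + X = _]eq_bigr do rewrite !coef_Poly -map_rev !nth_intr -rmorphM.
  rewrite -!rmorph_sum !sum_convi -rmorphD E.
  by case: (k == n.-1) => /=; rewrite ?mulr1n ?mul0rn.
have -> : ((k == n.-1)%:R *+ (2 * n) : algC) = 0.
  have [->|n0] := eqVneq n 0; first by rewrite muln0 mulr0n.
  rewrite (_ : (k == n.-1) = false) ?mul0rn //; apply/negbTE/eqP; lia.
rewrite big1 ?add0r; last first.
  move=> j _; rewrite !coef_Poly; case: (ltnP j n) => hj.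
    by rewrite [X in _ * X]nth_default ?mulr0 // size_rev size_map su; lia.
  by rewrite nth_default ?mul0r // size_map su.
rewrite big1 // => j _; rewrite !coef_Poly; case: (ltnP j n) => hj.
  by rewrite [X in _ * X]nth_default ?mulr0 // size_rev size_map sv; lia.
by rewrite nth_default ?mul0r // size_map sv.
Qed.

Lemma real_pm s : real_seq (pm s).
Proof.
move=> i; case: (ltnP i (size (pm s))) => h.
  rewrite (nth_map false) -?(size_map (fun x : bool => if x then 1 else -1 : algC)) //.
  by case: (nth false s i); rewrite ?rmorph1 ?rmorphN1.
by rewrite nth_default // rmorph0.
Qed.

Lemma ker_ok (s1 s2 : seq bool) n : size s1 = n -> size s2 = n -> (0 < n)%N ->
  check (ipm s1) (ipm s2) n -> KerOK n (pm s1, pm s2).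
Proof.
move=> h1 h2 n0 ch; split => /=.
- by rewrite !size_map.
- exact: n0.
- by split; apply: real_pm.
rewrite !pm_ipm; apply: GCP_of_check => //; by rewrite size_map.
Qed.

Lemma K2_ok : KerOK 2 K2.
Proof. by apply: ker_ok => //; vm_compute. Qed.
Lemma K10_ok : KerOK 10 K10.
Proof. by apply: ker_ok => //; vm_compute. Qed.
Lemma K26_ok : KerOK 26 K26.
Proof. by apply: ker_ok => //; vm_compute. Qed.

Definition klen k := match k with Ker2 => 2 | Ker10 => 10 | Ker26 => 26 end%N.

Lemma kernel_ok k : KerOK (klen k) (kernel_pair k).
Proof. case: k; [exact: K2_ok | exact: K10_ok | exact: K26_ok]. Qed.

Lemma fold_inv ks : forall P m, (0 < m)%N -> Inv m P ->
  Inv (m * (2 ^ count (kernel_eqb Ker2) ks * 10 ^ count (kernel_eqb Ker10) ks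
             * 26 ^ count (kernel_eqb Ker26) ks))
      (foldl (fun P k => turyn (kernel_pair k) P) P ks).
Proof.
elim: ks => [|k ks IH] P m m0 HP /=; first by rewrite !expn0 !muln1.
have HP' : Inv (m * klen k) (turyn (kernel_pair k) P).
  case: P HP => c d HP; case: (kernel_pair k) (kernel_ok k) => a b Hk.
  exact: turyn_step.
have m1 : (0 < m * klen k)%N by rewrite muln_gt0 m0; case: k {HP'}.
suff -> : (m * (2 ^ (kernel_eqb Ker2 k + count (kernel_eqb Ker2) ks) *
       10 ^ (kernel_eqb Ker10 k + count (kernel_eqb Ker10) ks) *
       26 ^ (kernel_eqb Ker26 k + count (kernel_eqb Ker26) ks)))%N =
   (m * klen k * (2 ^ count (kernel_eqb Ker2) ks * 10 ^ count (kernel_eqb Ker10) ks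
             * 26 ^ count (kernel_eqb Ker26) ks))%N by apply: IH.
by case: k {HP' m1} => /=; rewrite ?add0n ?add1n ?expnS; ring.
Qed.

Definition Rc (s : seq algC) : {poly algC} := Poly (rev (map Num.conj_op s)).

Lemma rho_coef (u v : seq algC) n t : size u = n -> size v = n -> (t < n)%N ->
  rho u v (Posz t) = (Poly u * Rc v)`_(n.-1 - t).
Proof.
move=> su sv tn; rewrite /rho /Rc su coefM.
have -> : (n.-1 - t).+1 = (n - t)%N by lia.
apply: eq_bigr => j _; have jn := ltn_ord j.
rewrite !coef_Poly nth_rev ?size_map ?sv; last by lia.
rewrite (nth_map 0); last by rewrite sv; lia.
by congr (_ * _^* ); congr nth; lia.
Qed.

Lemma rho_neg (u v : seq algC) k : size u = size v ->
  rho u v (Negz k) = (rho v u (Posz k.+1))^*.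
Proof.
move=> suv; rewrite /rho rmorph_sum suv; apply: eq_bigr => j _.
by rewrite rmorphM /= conjCK mulrC.
Qed.

Lemma Poly_wrap x (s : seq algC) y :
  Poly (x :: rcons s y) = x%:P + 'X * Poly s + 'X * 'X^(size s) * y%:P.
Proof.
rewrite /= cons_poly_def -cats1 Poly_cat /= cons_poly_def mul0r add0r; ring.
Qed.

Lemma Rc_wrap x (s : seq algC) y :
  Rc (x :: rcons s y) = (y^*)%:P + 'X * Rc s + 'X * 'X^(size s) * (x^*)%:P.
Proof.
rewrite /Rc map_cons map_rcons rev_cons rev_rcons.
have -> : forall (z w : algC) l, rcons (z :: l) w = z :: rcons l w by [].
by rewrite Poly_wrap size_rev size_map.
Qed.

Lemma real_map (s : seq algC) : real_seq s -> map Num.conj_op s = s.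
Proof.
move=> rs; apply: (@eq_from_nth _ 0); rewrite ?size_map // => i hi.
by rewrite (nth_map 0) // rs.
Qed.

Lemma final_polys (a b : seq algC) m (x : algC) : (0 < m)%N -> Inv m (a, b) ->
  let e := a ++ rev b in
  let f := b ++ [seq - z | z <- rev a] in
  let g := x :: rcons e (- x^*) in
  let h := x :: rcons f (x^*) in
  let A := Poly a in let B := Poly b in
  let Ar := Poly (rev a) in let Br := Poly (rev b) in
  Poly g * Rc g + Poly h * Rc h =
    'X^(2 * m + 2) * (2%:R * (A * Ar + B * Br)) + 'X^(4 * m + 1) * (x * x^* *+ 4)%:P
    + 'X * ((x *+ 2)%:P * (B - A)) + 'X^(6 * m + 2) * ((x^* *+ 2)%:P * (Br - Ar))
  /\
  Poly g * Rc h + Poly h * Rc g =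
    'X^(2 * m + 1) * ((x *+ 2)%:P * (Ar + Br)) + 'X^2 * ((B - A) * (B + A))
    + 'X^(4 * m + 2) * ((Br - Ar) * (Br + Ar) + (x^* *+ 2)%:P * (A + B)).
Proof.
move=> m0 HI e f g h A B Ar Br.
case: HI => [[sa sb] [ra rb] gab h1 h2].
rewrite /= in sa sb ra rb gab h1 h2.
have se : size e = (m + m + (m + m))%N by rewrite size_cat size_rev sa sb; lia.
have sf : size f = (m + m + (m + m))%N by rewrite size_cat size_map size_rev sa sb; lia.
have re : map Num.conj_op e = e.
  by rewrite map_cat real_map // map_rev real_map.
have rf : map Num.conj_op f = f.
  rewrite map_cat real_map //; congr (_ ++ _).
  transitivity (map -%R (map Num.conj_op (rev a))).
    by rewrite -!map_comp; apply: eq_map => z /=; rewrite rmorphN.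
  by rewrite map_rev real_map.
have Pe : Poly e = A + 'X^m * 'X^m * Br by rewrite Poly_cat sa -exprD; congr (_ + 'X^_ * _); lia.
have Per : Rc e = B + 'X^m * 'X^m * Ar.
  by rewrite /Rc re rev_cat revK Poly_cat sb -exprD; congr (_ + 'X^_ * _); lia.
have Pf : Poly f = B - 'X^m * 'X^m * Ar.
  by rewrite Poly_cat sb Poly_opp mulrN -exprD; congr (_ - 'X^_ * _); lia.
have Pfr : Rc f = - A + 'X^m * 'X^m * Br.
  rewrite /Rc rf rev_cat -map_rev revK Poly_cat size_map sa Poly_opp -exprD.
  by congr (_ + 'X^_ * _); lia.
have Pg : Poly g = x%:P + 'X * Poly e + 'X * 'X^(size e) * (- x^*)%:P by rewrite Poly_wrap.
have Ph : Poly h = x%:P + 'X * Poly f + 'X * 'X^(size f) * (x^*)%:P by rewrite Poly_wrap.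
have Rg : Rc g = (- x)%:P + 'X * Rc e + 'X * 'X^(size e) * (x^*)%:P.
  by rewrite Rc_wrap rmorphN /= conjCK.
have Rh : Rc h = x%:P + 'X * Rc f + 'X * 'X^(size f) * (x^*)%:P.
  by rewrite Rc_wrap /= conjCK.
rewrite Pg Ph Rg Rh Pe Per Pf Pfr se sf.
have -> : (2 * m + 2 = m + m + 1 + 1)%N by lia.
have -> : (4 * m + 1 = m + m + m + m + 1)%N by lia.
have -> : (6 * m + 2 = m + m + m + m + m + m + 1 + 1)%N by lia.
have -> : (2 * m + 1 = m + m + 1)%N by lia.
have -> : (4 * m + 2 = m + m + m + m + 1 + 1)%N by lia.
rewrite !exprD !expr1 !polyCN !polyCMn !polyCM.
split; ring.
Qed.

Lemma final_czcp (a b : seq algC) m (x : algC) : (0 < m)%N -> Inv m (a, b) ->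
  CZCP (2 * (2 * m) + 2) (m + 1)
    (x :: rcons (a ++ rev b) (- x^*))
    (x :: rcons (b ++ [seq - z | z <- rev a]) (x^*)).
Proof.
move=> m0 HI.
have := @final_polys a b m x m0 HI; cbv zeta => -[S1 S2].
case: HI => [[sa sb] [ra rb] gab h1 h2].
rewrite /= in sa sb ra rb gab h1 h2.
set g := x :: _; set h := x :: _.
have sg : size g = (2 * (2 * m) + 2)%N.
  by rewrite /g /= size_rcons size_cat size_rev sa sb; lia.
have sh : size h = (2 * (2 * m) + 2)%N.
  by rewrite /h /= size_rcons size_cat size_map size_rev sa sb; lia.
have BAlo : forall j, (j < m)%N -> (Poly b - Poly a)`_j = 0.
  by move=> j hj; rewrite coefB !coef_Poly h1 // subrr.
have BAhi : forall j, (2 * m <= j)%N -> (Poly b - Poly a)`_j = 0.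
  by move=> j hj; rewrite coefB !coef_Poly !nth_default ?sa ?sb // subrr.
have C1 : forall i, ((i <= m) || (3 * m <= i <= 4 * m))%N ->
    (Poly g * Rc g + Poly h * Rc h)`_i = 0.
  move=> i hi; rewrite S1 !coefD.
  have -> : ('X^(2 * m + 2) * (2%:R * (Poly a * Poly (rev a) + Poly b * Poly (rev b))))`_i = 0.
    rewrite coefXnM; case: ltnP => // hi2.
    rewrite gab mulr_natl coefMn mulr_natl coefMn coefXn.
    rewrite (_ : (_ == _) = false) ?mul0rn ?mulr0n //; apply/negbTE/eqP; lia.
  have -> : ('X^(4 * m + 1) * (x * x^* *+ 4)%:P)`_i = 0.
    by rewrite coefXnM (_ : (i < 4 * m + 1)%N = true) //; lia.
  have -> : ('X^(6 * m + 2) * ((x^* *+ 2)%:P * (Poly (rev b) - Poly (rev a))))`_i = 0.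
    by rewrite coefXnM (_ : (i < 6 * m + 2)%N = true) //; lia.
  rewrite coefXM coefCM; case: eqP => [_|hi0]; first by rewrite ?add0r ?addr0.
  have [hl|hl] := ltnP i.-1 m; first by rewrite BAlo // mulr0 ?add0r ?addr0.
  by rewrite BAhi ?mulr0 ?add0r ?addr0 //; lia.
have C2 : forall i, (i <= m)%N -> (Poly g * Rc h + Poly h * Rc g)`_i = 0.
  move=> i hi; rewrite S2 !coefD.
  have -> : ('X^(2 * m + 1) * ((x *+ 2)%:P * (Poly (rev a) + Poly (rev b))))`_i = 0.
    by rewrite coefXnM (_ : (i < 2 * m + 1)%N = true) //; lia.
  rewrite [X in _ + _ + X]coefXnM (_ : (i < 4 * m + 2)%N = true) ?addr0; last by lia.
  rewrite coefXnM; case: ltnP => // hi2; rewrite ?add0r // coefM big1 // => j _.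
  by rewrite BAlo ?mul0r //; have := ltn_ord j; lia.
have Pos : forall t, ((1 <= t <= m + 1) ||
    (2 * (2 * m) + 2 - (m + 1) <= t <= 2 * (2 * m) + 2 - 1))%N ->
    acorr g t + acorr h t = 0.
  move=> t ht; rewrite /acorr !(rho_coef (n := (2 * (2 * m) + 2)%N)) //; try lia.
  by rewrite -coefD C1 //; lia.
have Cr : forall t, (2 * (2 * m) + 2 - (m + 1) <= t <= 2 * (2 * m) + 2 - 1)%N ->
    rho g h t + rho h g t = 0.
  move=> t ht; rewrite !(rho_coef (n := (2 * (2 * m) + 2)%N)) //; try lia.
  by rewrite -coefD C2 //; lia.
split => //.
- case=> [t|k] cond; first exact: Pos.
  rewrite /acorr !rho_neg // -rmorphD.
  by have := Pos k.+1 cond; rewrite /acorr => ->; rewrite rmorph0.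
- case=> [t|k] cond; first exact: Cr.
  rewrite !rho_neg ?sg ?sh // addrC -rmorphD.
  by rewrite Cr // rmorph0.
Qed.

Lemma Inv_K2 : Inv 1 K2.
Proof.
have [[s1 s2] _ [r1 r2] gk] := K2_ok.
split => //.
- by case=> [|i] //=; rewrite /K2 /=.
- case=> [|[|i]] //= _; rewrite /K2 /=; first by rewrite opprK.
  by rewrite !nth_nil oppr0.
Qed.

Unset Implicit Arguments.
Theorem theorem2 (q alpha beta gamma : nat) (ks : seq kernel)
  (x0 y0 x1 y1 : algC) :
  (2 <= q)%N -> (1 <= alpha)%N ->
  (count (kernel_eqb Ker2) ks).+1 = alpha ->
  count (kernel_eqb Ker10) ks = beta ->
  count (kernel_eqb Ker26) ks = gamma ->
  in_Uq q x0 -> in_Uq q y0 -> in_Uq q x1 -> in_Uq q y1 ->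
  x0 - y1^* = 0 -> x1 + y0^* = 0 -> x0 = x1 -> y0^* = - y1^* ->
  let N := (2 ^ alpha * 10 ^ beta * 26 ^ gamma)%N in
  let a := (turyn_rec ks).1 in
  let b := (turyn_rec ks).2 in
  let c := rev b in
  let d := [seq - x | x <- rev a] in
  let e := a ++ c in
  let f := b ++ d in
  let g := x0 :: rcons e y0 in
  let h := x1 :: rcons f y1 in
  CZCP (2 * N + 2) (N %/ 2 + 1) g h.
Proof.
move=> _ _ ha hb hc _ _ _ _ e1 e2 e3 _ N a b c d e f g h.
set m := (2 ^ count (kernel_eqb Ker2) ks * 10 ^ count (kernel_eqb Ker10) ks
             * 26 ^ count (kernel_eqb Ker26) ks)%N.
have m0 : (0 < m)%N by rewrite /m !muln_gt0 !expn_gt0.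
have HI : Inv m (a, b).
  have := fold_inv ks (@ltn0Sn 0) Inv_K2; rewrite mul1n.
  by rewrite /a /b /turyn_rec; case: (foldl _ _ _).
have EN : N = (2 * m)%N by rewrite /N /m -ha -hb -hc expnS !mulnA.
have y1E : y1 = x0^*.
  by move/subr0_eq: e1 => ->; rewrite conjCK.
have y0E : y0 = - x0^*.
  by rewrite -[y0]conjCK (_ : y0^* = - x0) ?rmorphN //; apply/eqP; rewrite -addr_eq0 e3 addrC e2.
rewrite EN mulKn // /g /h /e /f /c /d y1E y0E -e3.
exact: final_czcp.
Qed.
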